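(* Let $H$ be an abelian group with an alternating $\mathbb{Z}$-bilinear form $\langle-,-\rangle\neq0$, and let $z\in\ker\mu$. Let $\omega\in C^3(\mathbb{Q}[H])_{(z)}$ be the cochain with $\omega([u],[v],[w])=\langle u,v\rangle$ if $u+v+w=z$ and $\omega([u],[v],[w])=0$ otherwise (for $u,v,w\in H$); $\omega$ is a 3-cocycle, and so is its restriction to $\mathbb{Q}[H^{(1)}]$. If $z$ is a torsion element (i.e. $nz=0$ for some $n\in\mathbb{Z}\setminus\{0\}$), then $[\omega]\neq0$ in $H^3(\mathbb{Q}[H])_{(z)}$. If $z$ is not a torsion element, then the class of the restriction of $\omega$ is $0$ in $H^3(\mathbb{Q}[H^{(1)}])_{(z)}$.
   Context: $\mu:H\to\mathrm{Hom}_{\mathbb{Z}}(H,\mathbb{Z})$, $\mu(x)(y)=\langle x,y\rangle$; $H^{(1)}:=H\setminus\ker\mu$. $\mathbb{Q}[S]$ ($S\subset H$) is the $\mathbb{Q}$-vector space with basis symbols $[x]$, $x\in S$; $\mathbb{Q}[H]$ is a Lie algebra via $[[x],[y]]=\langle x,y\rangle[x+y]$ and $\mathbb{Q}[H^{(1)}]$ is a Lie subalgebra. For a Lie algebra $\mathfrak g$, $C^p(\mathfrak g)=\mathrm{Hom}_{\mathbb{Q}}(\bigwedge^p\mathfrak g,\mathbb{Q})$ is the Chevalley–Eilenberg cochain complex with trivial coefficients, with $d\eta(x_1,\dots,x_{p+1})=\sum_{i<j}(-1)^{i+j}\eta([x_i,x_j],x_1,\dots,\widehat{x_i},\dots,\widehat{x_j},\dots,x_{p+1})$.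 For $S\in\{H,H^{(1)}\}$, $p>0$, $C^p(\mathbb{Q}[S])_{(z)}$ is the subcomplex of cochains vanishing on $([u_1],\dots,[u_p])$, $u_i\in S$, whenever $u_1+\cdots+u_p\neq z$, and $H^p(\mathbb{Q}[S])_{(z)}$ is its cohomology. *)

(* Defs.v *)
From mathcomp Require Import all_boot all_algebra.
Set Implicit Arguments. Unset Strict Implicit. Unset Printing Implicit Defensive.
Import GRing.Theory.
Local Open Scope ring_scope.

(* Cochains on the Lie algebra Q[S] (S a subset of H) are represented by
   their values on basis symbols [x], x in S: an element of
   C^p(Q[S]) = Hom(/\^p Q[S], Q) is the same as an alternating function
   S^p -> Q.  Values of the Rocq functions outside S are irrelevant. *)

Section LieCochains.
Context {H : zmodType}.

Definition is_bilinear (b : H -> H -> int) : Prop :=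
  (forall x y w, b (x + y) w = b x w + b y w) /\
  (forall x y w, b x (y + w) = b x y + b x w).

Definition is_alternating (b : H -> H -> int) : Prop := forall x, b x x = 0.

Definition in_ker_mu (b : H -> H -> int) (x : H) : Prop := forall y, b x y = 0.

Definition H1 (b : H -> H -> int) : H -> Prop := fun x => ~ in_ker_mu b x.

Definition is_torsion (z : H) : Prop := exists n : int, n != 0 /\ z *~ n = 0.

Definition cochain2_z (S : H -> Prop) (z : H) (eta : H -> H -> rat) : Prop :=
  (forall x, S x -> eta x x = 0) /\
  (forall x y, S x -> S y -> eta x y = - eta y x) /\
  (forall x y, S x -> S y -> x + y != z -> eta x y = 0).

(* Chevalley--Eilenberg differential C^2 -> C^3 on basis elements, with
   [[x],[y]] = <x,y>[x+y] (indices 1-based as in the paper's formula). *)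
Definition d2 (b : H -> H -> int) (eta : H -> H -> rat) (x1 x2 x3 : H) : rat :=
  - (b x1 x2)%:~R * eta (x1 + x2) x3
  + (b x1 x3)%:~R * eta (x1 + x3) x2
  - (b x2 x3)%:~R * eta (x2 + x3) x1.

Definition d3 (b : H -> H -> int) (om : H -> H -> H -> rat) (x1 x2 x3 x4 : H) : rat :=
  - (b x1 x2)%:~R * om (x1 + x2) x3 x4
  + (b x1 x3)%:~R * om (x1 + x3) x2 x4
  - (b x1 x4)%:~R * om (x1 + x4) x2 x3
  - (b x2 x3)%:~R * om (x2 + x3) x1 x4
  + (b x2 x4)%:~R * om (x2 + x4) x1 x3
  - (b x3 x4)%:~R * om (x3 + x4) x1 x2.

Definition omega (b : H -> H -> int) (z : H) (u v w : H) : rat :=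
  if u + v + w == z then (b u v)%:~R else 0.

Definition omega_cocycle (S : H -> Prop) (b : H -> H -> int) (z : H) : Prop :=
  forall x1 x2 x3 x4, S x1 -> S x2 -> S x3 -> S x4 ->
    d3 b (omega b z) x1 x2 x3 x4 = 0.

Definition omega_class_zero (S : H -> Prop) (b : H -> H -> int) (z : H) : Prop :=
  exists eta : H -> H -> rat, cochain2_z S z eta /\
    forall u v w, S u -> S v -> S w -> omega b z u v w = d2 b eta u v w.

End LieCochains.

(* Main.v *)
Require Import Defs.
From mathcomp Require Import all_boot all_algebra.
Import GRing.Theory.
Local Open Scope ring_scope.
From mathcomp Require Import boolp classical_sets.
From mathcomp Require Import ring lra.
Import Num.Theory.
Section Aux.
Context {H : zmodType} (b : H -> H -> int) (hbil : is_bilinear b)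
  (halt : is_alternating b).

Let hl := proj1 hbil.
Let hr := proj2 hbil.

Lemma bl0 w : b 0 w = 0.
Proof. have h := hl 0 0 w; rewrite addr0 in h.
by apply: (addrI (b 0 w)); rewrite addr0 -h. Qed.
Lemma br0 w : b w 0 = 0.
Proof. have h := hr w 0 0; rewrite addr0 in h.
by apply: (addrI (b w 0)); rewrite addr0 -h. Qed.
Lemma blN x w : b (- x) w = - b x w.
Proof. by apply/eqP; rewrite -addr_eq0 addrC -hl subrr bl0. Qed.
Lemma brN x w : b w (- x) = - b w x.
Proof. by apply/eqP; rewrite -addr_eq0 addrC -hr subrr br0. Qed.
Lemma blB x y w : b (x - y) w = b x w - b y w.
Proof. by rewrite hl blN. Qed.
Lemma brB x y w : b w (x - y) = b w x - b w y.
Proof. by rewrite hr brN. Qed.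
Lemma bC x y : b y x = - b x y.
Proof. have h := halt (x + y). rewrite hl !hr !halt add0r addr0 in h.
by apply/eqP; rewrite -addr_eq0 addrC h. Qed.

Lemma blnat z y k : b (z *+ k) y = b z y *+ k.
Proof. elim: k => [|k IH]; first by rewrite !mulr0n bl0.
by rewrite !mulrS hl IH. Qed.
Lemma brnat z y k : b y (z *+ k) = b y z *+ k.
Proof. elim: k => [|k IH]; first by rewrite !mulr0n br0.
by rewrite !mulrS hr IH. Qed.

End Aux.
Section Cocyc.
Context {H : zmodType} (b : H -> H -> int) (hbil : is_bilinear b)
  (halt : is_alternating b) (z : H) (hz : in_ker_mu b z).

Let hl := proj1 hbil.
Let hr := proj2 hbil.

Lemma omega_eq s p q r : p + q + r = s ->
  omega b z p q r = if s == z then (b p q)%:~R else 0.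
Proof. by rewrite /omega => ->. Qed.

Lemma cocycle_all x1 x2 x3 x4 : d3 b (omega b z) x1 x2 x3 x4 = 0.
Proof.
set s := x1 + x2 + x3 + x4.
rewrite /d3.
rewrite (@omega_eq s (x1 + x2)) //.
rewrite (@omega_eq s (x1 + x3)); last by rewrite (addrAC x1 x3 x2).
rewrite (@omega_eq s (x1 + x4)); last by rewrite (addrAC x1 x4 x2) (addrAC _ x4 x3).
rewrite (@omega_eq s (x2 + x3)); last by rewrite (addrC _ x1) addrA.
rewrite (@omega_eq s (x2 + x4)); last by rewrite (addrC _ x1) addrA (addrAC _ x4 x3).
rewrite (@omega_eq s (x3 + x4)); last by rewrite (addrC _ x1) addrA (addrAC _ x4 x2) (addrAC x1 x3 x2).
case: eqP => hs; last by rewrite !mulr0; ring.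
have e4 : x4 = z - (x1 + x2 + x3) by rewrite -hs /s addrC addKr.
clearbody s; subst x4.
rewrite !opprD !(hl, hr, blN b hbil, brN b hbil) !halt.
rewrite (bC b hbil halt x1 x2) (bC b hbil halt x1 x3) (bC b hbil halt x2 x3).
rewrite !(bC b hbil halt z) !hz.
ring.
Qed.
End Cocyc.
Section Tors.
Context {H : zmodType} (b : H -> H -> int) (hbil : is_bilinear b)
  (halt : is_alternating b) (z : H) (hz : in_ker_mu b z).

Let hl := proj1 hbil.
Let hr := proj2 hbil.

Lemma torsion_part : (exists x y : H, b x y != 0) -> is_torsion z ->
  ~ omega_class_zero (fun _ : H => True) b z.
Proof.
move=> [x [y hxy]] [n [n0 hn]] [eta [[e0 [eanti e_sup]] hE]].
pose f u := eta u (z - u).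
have zz u : z - (z - u) = u by rewrite opprB addrC subrK.
have fA u : f (z - u) = - f u.
  by rewrite /f zz eanti.
have K u v : b u v != 0 -> f (u + v) = f u + f v - 1.
  move=> huv; pose w := z - (u + v).
  have E := hE u v w I I I.
  have huvw : u + v + w = z by rewrite /w addrC subrK.
  have e1 : u + w = z - v by rewrite -huvw (addrAC u v w) addrK.
  have e2 : v + w = z - u by rewrite -huvw -(addrA u v w) (addrC u (v + w)) addrK.
  have b1 : b u w = - b u v.
    by rewrite /w opprD !hr !(brN b hbil) halt (bC b hbil halt z) hz; ring.
  have b2 : b v w = b u v.
    by rewrite /w opprD !hr !(brN b hbil) halt (bC b hbil halt z) hz (bC b hbil halt u v); ring.
  move: E; rewrite /omega huvw eqxx /d2 e1 e2 b1 b2 (eanti (z - v)) // (eanti (z - u)) //.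
  change (eta (u + v) w) with (f (u + v)); rewrite -/(f u) -/(f v).
  move=> E.
  have hA : ((b u v)%:~R : rat) != 0 by rewrite intr_eq0.
  apply/eqP; rewrite -subr_eq0; apply/eqP; apply: (mulfI hA); rewrite mulr0.
  transitivity ((b u v)%:~R - ((b u v)%:~R : rat)); last by rewrite subrr.
  rewrite [X in _ = _ - X]E !intrN; ring.
have bzl k v : b (z *+ k) v = 0 by rewrite (blnat b hbil) hz mul0rn.
have bzr k v : b v (z *+ k) = 0.
  by rewrite (brnat b hbil) (bC b hbil halt z) hz oppr0 mul0rn.
have K1 := K x (y - x).
rewrite (brB b hbil) halt subr0 addrC subrK in K1.
have K2 := K (- x) y.
rewrite (blN b hbil) oppr_eq0 addrC in K2.
have fN : f (- x) = 2 - f x by have := K1 hxy; have := K2 hxy; lra.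
pose u := - x.
have buy : b u y != 0 by rewrite /u (blN b hbil) oppr_eq0.
pose c := f (u + z) - f u.
have ind k : f (u + z *+ k) = f u + c *+ k.
  elim: k => [|k IH]; first by rewrite !mulr0n !addr0.
  pose w := u + z *+ k; pose v := y + z *+ k.
  have Ka := K w y; have Kb := K (w + z) y; have Kc := K u v; have Kd := K (u + z) v.
  rewrite /w hl bzl addr0 in Ka; have {}Ka := Ka buy.
  rewrite /w !hl bzl hz !addr0 in Kb; have {}Kb := Kb buy.
  rewrite /v hr bzr addr0 in Kc; have {}Kc := Kc buy.
  rewrite /v hl !hr !bzr !hz !addr0 in Kd; have {}Kd := Kd buy.
  have q1 : w + y = u + v by rewrite /w /v -!addrA (addrC (z *+ k)).
  have q2 : w + z + y = u + z + v.
    rewrite /w /v -!addrA; congr (u + _).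
    by rewrite addrCA (addrC (z *+ k) y).
  rewrite q1 in Ka; rewrite q2 in Kb.
  rewrite mulrSr addrA -/w mulrSr.
  have : f w = f u + c *+ k by [].
  rewrite /c in IH *; lra.
have [m [m0 hm]] : exists m, (0 < m)%N /\ z *+ m = 0.
  case: n n0 hn => N.
    by move=> N0 hN; exists N; split => //; rewrite lt0n; apply: contra N0 => /eqP ->.
  move=> _ hN; exists N.+1; split => //; apply/eqP; rewrite -oppr_eq0.
  by apply/eqP; exact: hN.
have := ind m; rewrite hm addr0 => /eqP; rewrite addrC -subr_eq subrr eq_sym mulrn_eq0.
rewrite (negbTE (lt0n_neq0 m0)) /= => /eqP c0.
have := fA x; rewrite /c in c0.
have -> : z - x = u + z by rewrite /u addrC.
rewrite -/u in fN; lra.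
Qed.
End Tors.
Section Ext.
Context {H : zmodType} (z : H) (hnt : ~ is_torsion z).

Definition good (A : set (H * rat)) : Prop :=
  [/\ forall h q q', A (h,q) -> A (h,q') -> q = q',
      forall h q h' q', A (h,q) -> A (h',q') -> A (h - h', q - q') &
      forall p, A p -> A (z, 1)].

Lemma sub_eq_of (a b c e : H) : a + b = c + e -> c - a = b - e.
Proof.
move=> E; have -> : c = a + b - e by rewrite E addrK.
by rewrite -(addrA a b (-e)) (addrC a) addrK.
Qed.

Lemma good_chain (F : set (set (H * rat))) :
  (forall X, F X -> good X) -> total_on F (fun X Y => forall t, X t -> Y t) ->
  good (fun p => exists2 X, F X & X p).
Proof.
move=> FP tot; split.
- move=> h q q' [X FX Xp] [Y FY Yp].
  have [gX _ _] := FP X FX; have [gY _ _] := FP Y FY.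
  by case: (tot X Y FX FY) => s; [apply: gY (s _ Xp) Yp | apply: gX Xp (s _ Yp)].
- move=> h q h' q' [X FX Xp] [Y FY Yp].
  have [_ gX _] := FP X FX; have [_ gY _] := FP Y FY.
  case: (tot X Y FX FY) => s.
    by exists Y => //; apply: gY (s _ Xp) Yp.
  by exists X => //; apply: gX Xp (s _ Yp).
- move=> p [X FX Xp]; have [_ _ gX] := FP X FX.
  by exists X => //; apply: gX Xp.
Qed.

Section GoodA.
Variables (A : set (H * rat)) (gA : good A) (Az : A (z, 1)).
Let f1 := let: And3 a _ _ := gA in a.
Let f2 := let: And3 _ a _ := gA in a.

Lemma gA0 : A (0, 0).
Proof. by have := f2 _ _ _ _ Az Az; rewrite !subrr. Qed.
Lemma gAN {h q} : A (h, q) -> A (- h, - q).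
Proof. by move=> hq; have := f2 _ _ _ _ gA0 hq; rewrite !sub0r. Qed.
Lemma gAD {h q h' q'} : A (h, q) -> A (h', q') -> A (h + h', q + q').
Proof. by move=> h1 h2; have := f2 _ _ _ _ h1 (gAN h2); rewrite !opprK. Qed.
Lemma gAn {h q} n : A (h, q) -> A (h *+ n, q *+ n).
Proof.
move=> hq; elim: n => [|n IH]; first by rewrite !mulr0n; exact: gA0.
by rewrite !mulrS; apply: gAD.
Qed.
Lemma gAZ {h q} k : A (h, q) -> A (h *~ k, q *~ k).
Proof.
move=> hq; case: k => n; first exact: gAn.
by rewrite !NegzE !mulrNz; apply: gAN; apply: gAn.
Qed.
End GoodA.
Arguments gA0 {A}.
Arguments gAN {A} gA Az {h q}.
Arguments gAD {A} gA Az {h q h' q'}.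
Arguments gAn {A} gA Az {h q} n.
Arguments gAZ {A} gA Az {h q} k.

Lemma hom_ext : exists phi : H -> rat,
  (forall x y, phi (x + y) = phi x + phi y) /\ phi z = 1.
Proof.
have [|A [gA maxA]] := @Zorn_bigcup (H * rat) good.
  move=> F FP tot; apply: good_chain => //.
have maxB B : (forall t, A t -> B t) -> (exists t, B t /\ ~ A t) -> ~ good B.
  move=> AB [t [Bt nAt]]; apply: maxA; split; first by move=> ?; apply: AB.
  by move=> BA; apply: nAt; apply: BA.
have Az : A (z, 1).
  case: (pselect (exists p, A p)) => [[p Ap]|nA]; first by case: gA => _ _ g3; exact: g3 Ap.
  exfalso; apply: (maxB (fun p => exists k : int, p = (z *~ k, k%:~R))).
  - by move=> t At; exfalso; apply: nA; exists t.
  - exists (z, 1); split; first by exists 1; rewrite mulr1z.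
    by move=> Az; apply: nA; exists (z, 1).
  split.
  + move=> h q q' [k [-> ->]] [k' [/eqP e ->]].
    rewrite -subr_eq0 -mulrzBr in e.
    case: (pselect (k - k' = 0)) => [/eqP|nk]; first by rewrite subr_eq0 => /eqP ->.
    by exfalso; apply: hnt; exists (k - k'); split; [apply/eqP|apply/eqP].
  + move=> h q h' q' [k [-> ->]] [k' [-> ->]].
    by exists (k - k'); rewrite mulrzBr intrB.
  + by move=> _ _; exists 1; rewrite mulr1z.
have f1 := let: And3 a _ _ := gA in a.
have f2 := let: And3 _ a _ := gA in a.
have dom h : exists q, A (h, q).
  apply: contrapT => nd.
  have nA q : ~ A (h, q) by move=> Ahq; apply: nd; exists q.
  have [c hc] : exists c : rat, forall i r, A (h *~ i, r) -> r = c *~ i.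
    case: (pselect (exists m r, m != 0 /\ A (h *~ m, r))) => [[m [r [m0 Amr]]]|nm].
      exists (r / m%:~R) => i r' Ai.
      have A1 := gAZ gA Az m Ai; have A2 := gAZ gA Az i Amr.
      rewrite (mulrzAC i m h) in A2.
      have E := f1 _ _ _ A1 A2.
      have M0 : (m%:~R : rat) != 0 by rewrite intr_eq0.
      rewrite -(mulrzr r' m) -(mulrzr r i) in E; rewrite -(mulrzr (r / m%:~R) i); apply: (mulIf M0); rewrite E; field.
      exact: M0.
    exists 0 => i r Ai.
    case: (pselect (i = 0)) => [i0|i0].
      subst i; rewrite mulr0z in Ai; rewrite mulr0z.
      exact: f1 Ai (gA0 gA Az).
    by exfalso; apply: nm; exists i, r; split => //; apply/eqP.
  apply: (maxB (fun p => exists d q j, A (d, q) /\ p = (d + h *~ j, q + c *~ j))).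
  - move=> [d q] Adq; exists d, q, 0; split => //; by rewrite !mulr0z !addr0.
  - exists (h, c); split; last exact: nA.
    exists 0, 0, 1; split; [exact: gA0 gA Az | by rewrite !mulr1z !add0r].
  split.
  + move=> h0 q1 q2 [d [q [j [Adq /pair_equal_spec [e1 e2]]]]] [d' [q' [j' [Adq' /pair_equal_spec [e1' e2']]]]].
    have ed : d' - d = h *~ j - h *~ j' by apply: sub_eq_of; rewrite -e1 -e1'.
    have := f2 _ _ _ _ Adq' Adq; rewrite ed -mulrzBr => /hc; rewrite mulrzBr => E.
    rewrite e2 e2'; lra.
  + move=> h1 q1 h2 q2 [d [q [j [Adq /pair_equal_spec [e1 e2]]]]] [d' [q' [j' [Adq' /pair_equal_spec [e1' e2']]]]].
    exists (d - d'), (q - q'), (j - j'); split; first exact: f2 _ _ _ _ Adq Adq'.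
    rewrite e1 e2 e1' e2'; congr pair; by rewrite mulrzBr opprD addrACA.
  + by move=> p _; exists z, 1, 0; split => //; rewrite !mulr0z !addr0.
have [phi hphi] := choice dom.
exists phi; split.
  by move=> x y; apply: f1 (hphi (x + y)) (gAD gA Az (hphi x) (hphi y)).
exact: f1 (hphi z) Az.
Qed.
End Ext.

Theorem theorem5p4 (H : zmodType) (b : H -> H -> int)
  (hbil : is_bilinear b) (halt : is_alternating b)
  (hnz : exists x y : H, b x y != 0)
  (z : H) (hz : in_ker_mu b z) :
  omega_cocycle (fun _ : H => True) b z /\
  omega_cocycle (H1 b) b z /\
  (is_torsion z -> ~ omega_class_zero (fun _ : H => True) b z) /\
  (~ is_torsion z -> omega_class_zero (H1 b) b z).
Proof.
split; first by move=> *; apply: cocycle_all.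
split; first by move=> *; apply: cocycle_all.
split; first exact: torsion_part.
move=> hnt; have [phi [phiD phiz]] := hom_ext z hnt.
have hr := proj2 hbil.
pose eta x y : rat := if x + y == z then 1 - 2 * phi x else 0.
exists eta; split.
  split.
    move=> x _; rewrite /eta; case: eqP => // hx.
    have := phiD x x; rewrite hx phiz; lra.
  split.
    move=> x y _ _; rewrite /eta (addrC y x); case: eqP => hx; last by rewrite oppr0.
    have := phiD x y; rewrite hx phiz; lra.
  by move=> x y _ _ hx; rewrite /eta (negbTE hx).
move=> u v w _ _ _; rewrite /omega /d2 /eta.
rewrite (addrAC u w v) (addrC (v + w) u) addrA.
case: eqP => huvw; last by rewrite !mulr0; ring.
have ew : w = z - (u + v) by rewrite -huvw (addrC (u + v) w) addrK.
have pw : phi w = 1 - phi u - phi v.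
  have := phiD (u + v) w; rewrite huvw phiz phiD; lra.
have b1 : b u w = - b u v.
  by rewrite ew opprD !hr !(brN b hbil) halt (bC b hbil halt z) hz; ring.
have b2 : b v w = b u v.
  by rewrite ew opprD !hr !(brN b hbil) halt (bC b hbil halt z) hz (bC b hbil halt u v); ring.
rewrite b1 b2 !phiD pw intrN; ring.
Qed.
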